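(* Let $\alpha\in\mathbb{R}$, $\lambda>0$ and $E\in\mathbb{R}$. For every even $k\in 2\mathbb{N}$ there exists a polynomial $R_{k/2}$ of degree $k/2$ such that $$P_k(\theta)=R_{k/2}\Big(\cos 2\pi\big(\theta+(\tfrac k2-1)\alpha\big)\Big)\quad\text{for all }\theta\in\mathbb{T}.$$
   Context: $\mathbb{T}=\mathbb{R}/\mathbb{Z}$. For $\theta\in\mathbb{T}$, $n\in\mathbb{Z}$ put $v(\theta,n)=\cos2\pi((n-1)\alpha+\theta)$ if $n$ is odd and $v(\theta,n)=\cos 2\pi(n\alpha+\theta)$ if $n$ is even; $c(\theta,n)=\lambda$ if $n$ is odd and $c(\theta,n)=\cos2\pi(n\alpha+\theta)$ if $n$ is even. Let $\mathcal{H}_\theta$ be the tridiagonal operator on $\ell^2(\mathbb{Z})$ given by $(\mathcal{H}_\theta u)(n)=c(\theta,n)u(n+1)+c(\theta,n-1)u(n-1)+v(\theta,n)u(n)$. $P_k(\theta)=\det\big[(\mathcal{H}_\theta-E)|_{[0,k-1]}\big]$ denotes the determinant of the $k\times k$ matrix $\big(\langle\delta_m,(\mathcal{H}_\theta-E)\delta_n\rangle\big)_{m,n=0}^{k-1}$ (the restriction to $\{0,\dots,k-1\}$ with Dirichlet boundary conditions). *)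

(* Defs.v *)
From HB Require Import structures.
From mathcomp Require Import all_boot all_order all_algebra.
From mathcomp Require Import all_classical all_reals all_analysis.
Set Implicit Arguments. Unset Strict Implicit. Unset Printing Implicit Defensive.
Import Order.TTheory GRing.Theory Num.Theory.
Local Open Scope ring_scope.

Section Defs.
Variable R : realType.

Definition vpot (alpha theta : R) (n : int) : R :=
  if odd `|n|%N then cos (2 * pi * ((n - 1)%:~R * alpha + theta))
  else cos (2 * pi * (n%:~R * alpha + theta)).

Definition chop (lambda alpha theta : R) (n : int) : R :=
  if odd `|n|%N then lambda else cos (2 * pi * (n%:~R * alpha + theta)).

Definition Hop (alpha lambda theta : R) (u : int -> R) (n : int) : R :=
  chop lambda alpha theta n * u (n + 1)
  + chop lambda alpha theta (n - 1) * u (n - 1)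
  + vpot alpha theta n * u n.

Definition delta (m : int) : int -> R := fun n => (n == m)%:R.

(* P_k(theta) = det of (H_theta - E) restricted to {0,...,k-1}:
   entry (m,n) = <delta_m, (H_theta - E) delta_n> *)
Definition Pk (alpha lambda E : R) (k : nat) (theta : R) : R :=
  \det (\matrix_(i < k, j < k)
          (Hop alpha lambda theta (delta (j : nat)%:Z) (i : nat)%:Z
           - E * delta (j : nat)%:Z (i : nat)%:Z)).
End Defs.

(* Main.v *)
Require Import Defs.
From HB Require Import structures.
From mathcomp Require Import all_boot all_order all_algebra.
From mathcomp Require Import all_classical all_reals all_analysis.
From mathcomp Require Import zify ring lra.
Import Order.TTheory GRing.Theory Num.Theory.
Local Open Scope ring_scope.

Section Tri.
Variable R : comPzRingType.
Definition Dk (M : nat -> nat -> R) k := \det (\matrix_(i < k, j < k) M i j).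

Lemma sign_even (n : nat) : (-1) ^+ (n + n) = 1 :> R.
Proof. by rewrite -signr_odd addnn odd_double. Qed.

Lemma bump_lt h i : (i < h)%N -> bump h i = i.
Proof. by move=> H; rewrite /bump (_ : (h <= i)%N = false) //; lia. Qed.

Lemma bump_ge h i : (h <= i)%N -> bump h i = i.+1.
Proof. by move=> H; rewrite /bump H. Qed.

Lemma tri_rec M k (Hu : forall i j, (i.+1 < j)%N -> M i j = 0)
  (Hl : forall i j, (j.+1 < i)%N -> M i j = 0) :
  Dk M k.+2 = M k.+1 k.+1 * Dk M k.+1 - M k.+1 k * M k k.+1 * Dk M k.
Proof.
rewrite /Dk (expand_det_row _ ord_max) big_ord_recr /= big_ord_recr /= big1; last first.
  by move=> i _; rewrite !mxE /= Hl ?mul0r //; have := ltn_ord i; lia.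
rewrite add0r !mxE /= /cofactor /= sign_even mul1r.
have -> : row' ord_max (col' ord_max (\matrix_(i < k.+2, j < k.+2) M i j))
   = \matrix_(i < k.+1, j < k.+1) M i j.
  apply/matrixP => i j; rewrite !mxE /=.
  rewrite !bump_lt //. all: try (move: (ltn_ord j) => /=; lia). all: try (move: (ltn_ord i) => /=; lia).
rewrite (expand_det_col _ ord_max) big_ord_recr /= big1; last first.
  move=> i _; rewrite !mxE /= bump_lt; last by move: (ltn_ord i) => /=; lia.
  rewrite bump_ge // Hu ?mul0r //; move: (ltn_ord i) => /=; lia.
rewrite add0r !mxE /= /cofactor /= sign_even mul1r.
have -> : row' ord_max (col' ord_max (row' ord_max (col' (widen_ord (leqnSn k.+1) ord_max) (\matrix_(i < k.+2, j < k.+2) M i j))))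
   = \matrix_(i < k, j < k) M i j.
  apply/matrixP => i j; rewrite !mxE /=.
  rewrite !bump_lt //. all: try (move: (ltn_ord j) => /=; lia). all: try (move: (ltn_ord i) => /=; lia).
rewrite (@bump_lt k.+1 k) // (@bump_ge k k) //.
rewrite addSn exprS sign_even.
ring.
Qed.
End Tri.
Arguments Dk {R}.
Section S.
Variable R : realType.
Variables (lam E : R).
Definition Mx (x : nat -> R) (i j : nat) : R :=
  if i == j then x (i %/ 2)%N - E
  else if (i == j.+1) || (j == i.+1) then
    (if (minn i j %% 2 == 1)%N then lam else x (minn i j %/ 2)%N)
  else 0.

Lemma Mx_rev_entry n x y (i j : nat) : (forall m, (m < n)%N -> y m = x (n.-1 - m)%N) ->
  (i < n.*2)%N -> (j < n.*2)%N ->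
  Mx y i j = Mx x (n.*2.-1 - i) (n.*2.-1 - j).
Proof.
move=> Hy hi hj; rewrite /Mx.
case: (eqVneq i j) => [<-|nij].
  rewrite !eqxx Hy; last by lia.
  by congr (x _ - _); lia.
move/eqP: nij => nij.
have e1 : ((n.*2.-1 - i)%N == (n.*2.-1 - j)%N) = false by apply/eqP; lia.
rewrite e1.
case: (boolP ((i == j.+1) || (j == i.+1))) => h.
  have h' : (((n.*2.-1 - i)%N == (n.*2.-1 - j).+1) || ((n.*2.-1 - j)%N == (n.*2.-1 - i).+1)) = true.
    by move/orP: h => [/eqP h|/eqP h]; apply/orP; [right|left]; apply/eqP; lia.
  rewrite h'.
  have hm : minn (n.*2.-1 - i) (n.*2.-1 - j) = (n.*2 - 2 - minn i j)%N.
    by move/orP: h => [/eqP h|/eqP h]; lia.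
  rewrite hm.
  case: (boolP (minn i j %% 2 == 1)%N) => hp.
    by rewrite ifT //; apply/eqP; move/eqP: hp; lia.
  rewrite ifF; last by apply/negbTE/eqP; move/eqP: hp; lia.
  rewrite Hy; last by move/orP: h => [/eqP h|/eqP h]; lia.
  by congr x; move/orP: h => [/eqP h|/eqP h]; move/eqP: hp; lia.
have h' : (((n.*2.-1 - i)%N == (n.*2.-1 - j).+1) || ((n.*2.-1 - j)%N == (n.*2.-1 - i).+1)) = false.
  by apply/negbTE; apply/negP => /orP [/eqP h2|/eqP h2]; move/negP: h; apply; apply/orP; [right|left]; apply/eqP; lia.
by rewrite h'.
Qed.


Lemma Dk_rev n x y : (forall m, (m < n)%N -> y m = x (n.-1 - m)%N) ->
  Dk (Mx y) n.*2 = Dk (Mx x) n.*2.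
Proof.
move=> Hy; rewrite /Dk.
pose s := perm.perm (@rev_ord_inj n.*2).
have -> : \matrix_(i < n.*2, j < n.*2) Mx y i j
   = row_perm s (col_perm s (\matrix_(i < n.*2, j < n.*2) Mx x i j)).
  apply/matrixP => i j; rewrite !mxE !perm.permE /=.
  rewrite (@Mx_rev_entry n x y i j Hy (ltn_ord i) (ltn_ord j)).
  by congr (Mx x _ _); lia.
rewrite row_permE col_permE !det_mulmx !det_perm perm.odd_permV.
rewrite mulrCA -signr_addb addbb expr0 mulr1.
reflexivity.
Qed.
End S.
Arguments Mx {R}.
Section C.
Variable R : realType.

Definition cls (d : nat) (g : R -> R) := exists A B : {poly R},
  (size A <= d.+1)%N /\ (size B <= d)%N /\
  forall t, g t = A.[cos t] + sin t * B.[cos t].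

Lemma cls0 c : cls 0 (fun _ => c).
Proof.
exists c%:P, 0; split; first by rewrite size_polyC leq_b1.
split; first by rewrite size_poly0.
by move=> t; rewrite hornerC horner0 mulr0 addr0.
Qed.

Lemma cls_ext d g h : cls d g -> (forall t, g t = h t) -> cls d h.
Proof.
move=> [A [B [hA [hB e]]]] eh; exists A, B; do 2 split => //.
by move=> t; rewrite -eh e.
Qed.

Lemma cls_add d g h : cls d g -> cls d h -> cls d (fun t => g t + h t).
Proof.
move=> [A1 [B1 [hA1 [hB1 e1]]]] [A2 [B2 [hA2 [hB2 e2]]]].
exists (A1 + A2), (B1 + B2); split.
  by apply: leq_trans (size_polyD _ _) _; rewrite geq_max hA1 hA2.
split; first by apply: leq_trans (size_polyD _ _) _; rewrite geq_max hB1 hB2.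
by move=> t; rewrite e1 e2 !hornerD; ring.
Qed.

Lemma size_L (a c : R) : (size (a%:P + c *: 'X)%R <= 2)%N.
Proof.
apply: leq_trans (size_polyD _ _) _; rewrite geq_max.
rewrite size_polyC (leq_trans (leq_b1 _)) //.
by rewrite (leq_trans (size_scale_leq _ _)) // size_polyX.
Qed.

Lemma size_Q : (size (1 - 'X^2 : {poly R})%R <= 3)%N.
Proof.
apply: leq_trans (size_polyD _ _) _; rewrite geq_max size_polyN size_polyXn.
by rewrite size_poly1.
Qed.

Lemma cls_lin d g h a b be : cls d g ->
  (forall t, h t = (a + b * cos (t + be)) * g t) -> cls d.+1 h.
Proof.
move=> [A [B [hA [hB e]]]] eh.
pose L := a%:P + (b * cos be) *: 'X.
exists (L * A + (- (b * sin be)) *: ((1 - 'X^2) * B)), (L * B + (- (b * sin be)) *: A).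
split.
  apply: leq_trans (size_polyD _ _) _; rewrite geq_max; apply/andP; split.
    apply: leq_trans (size_polyMleq _ _) _; have := size_L a (b * cos be); rewrite -/L; lia.
  apply: leq_trans (size_scale_leq _ _) _.
  apply: leq_trans (size_polyMleq _ _) _; have := size_Q; lia.
split.
  apply: leq_trans (size_polyD _ _) _; rewrite geq_max; apply/andP; split.
    apply: leq_trans (size_polyMleq _ _) _; have := size_L a (b * cos be); rewrite -/L; lia.
  apply: leq_trans (size_scale_leq _ _) _; lia.
move=> t; rewrite eh e cosD /L !(hornerE, hornerD, hornerM, hornerZ, hornerC, hornerX).
rewrite -sin2cos2 /=; ring.
Qed.
End C.
Arguments cls {R}.

Section M.
Variable R : realType.
Variables (lam E : R).

Lemma Mx_diag x i : Mx lam E x i i = x (i %/ 2)%N - E.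
Proof. by rewrite /Mx eqxx. Qed.

Lemma Mx_sub x l : Mx lam E x l.+1 l = if (l %% 2 == 1)%N then lam else x (l %/ 2)%N.
Proof.
rewrite /Mx (_ : (l.+1 == l) = false); last by apply/eqP; lia.
by rewrite eqxx /= (_ : minn l.+1 l = l) //; lia.
Qed.

Lemma Mx_sup x l : Mx lam E x l l.+1 = if (l %% 2 == 1)%N then lam else x (l %/ 2)%N.
Proof.
rewrite /Mx (_ : (l == l.+1) = false); last by apply/eqP; lia.
by rewrite eqxx orbT (_ : minn l l.+1 = l) //; lia.
Qed.

Lemma Mx_u x i j : (i.+1 < j)%N -> Mx lam E x i j = 0.
Proof.
move=> h; rewrite /Mx (_ : (i == j) = false); last by apply/eqP; lia.
have h1 : (i == j.+1) = false by apply/eqP; lia.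
have h2 : (j == i.+1) = false by apply/eqP; lia.
by rewrite h1 h2.
Qed.

Lemma Mx_l x i j : (j.+1 < i)%N -> Mx lam E x i j = 0.
Proof.
move=> h; rewrite /Mx (_ : (i == j) = false); last by apply/eqP; lia.
have h1 : (i == j.+1) = false by apply/eqP; lia.
have h2 : (j == i.+1) = false by apply/eqP; lia.
by rewrite h1 h2.
Qed.

Definition Wd x m := if m is m'.+1 then Dk (Mx lam E x) (m'.*2.+1) else 0.

Lemma rec_odd x m : Dk (Mx lam E x) (m.*2.+1) =
  (x m - E) * Dk (Mx lam E x) m.*2 - lam ^+ 2 * Wd x m.
Proof.
case: m => [|m].
  rewrite /Dk /= det_mx00 det_mx11 mxE Mx_diag /=; ring.
rewrite /Wd (_ : (m.+1.*2.+1 = (m.*2.+1).+2)%N) //.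
rewrite tri_rec; [|exact: Mx_u|exact: Mx_l].
rewrite (_ : ((m.*2.+1).+1 = m.+1.*2)%N) // Mx_diag Mx_sub Mx_sup.
rewrite (_ : (m.+1.*2 %/ 2 = m.+1)%N); last by lia.
rewrite (_ : (m.*2.+1 %% 2 == 1)%N); last by apply/eqP; lia.
ring.
Qed.

Lemma rec_even x m : Dk (Mx lam E x) (m.+1.*2) =
  (x m - E) * Dk (Mx lam E x) (m.*2.+1) - x m ^+ 2 * Dk (Mx lam E x) m.*2.
Proof.
rewrite (_ : (m.+1.*2 = (m.*2).+2)%N); last by lia.
rewrite tri_rec; [|exact: Mx_u|exact: Mx_l].
rewrite Mx_diag Mx_sub Mx_sup.
rewrite (_ : (m.*2.+1 %/ 2 = m)%N); last by lia.
rewrite (_ : (m.*2 %/ 2 = m)%N); last by lia.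
rewrite (_ : (m.*2 %% 2 == 1)%N = false); last by apply/eqP; lia.
ring.
Qed.

Lemma cls_D (be : nat -> R) m :
  cls m (fun t => Dk (Mx lam E (fun i => cos (t + be i))) m.*2) /\
  cls m (fun t => Wd (fun i => cos (t + be i)) m).
Proof.
elim: m => [|m [IU IW]].
  split; last exact: cls0.
  apply: (@cls_ext R 0 _ _ (@cls0 R 1)) => t; by rewrite /Dk det_mx00.
set x := fun t i => cos (t + be i).
have IU' := IU; have IW' := IW.
split.
  apply: (@cls_ext R m.+1 (fun t => (E ^+ 2 + (- (2 * E)) * cos (t + be m)) * Dk (Mx lam E (x t)) m.*2
        + (lam ^+ 2 * E + (- lam ^+ 2) * cos (t + be m)) * Wd (x t) m) _).
    apply: cls_add.
      by apply: (@cls_lin R m _ _ (E ^+ 2) (- (2 * E)) (be m) IU _).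
    by apply: (@cls_lin R m _ _ (lam ^+ 2 * E) (- lam ^+ 2) (be m) IW _).
  move=> t; rewrite rec_even rec_odd /x; ring.
apply: (@cls_ext R m.+1 (fun t => (- E + 1 * cos (t + be m)) * Dk (Mx lam E (x t)) m.*2
      + (- lam ^+ 2 + 0 * cos (t + be m)) * Wd (x t) m) _).
  apply: cls_add.
    by apply: (@cls_lin R m _ _ (- E) (1) (be m) IU _).
  by apply: (@cls_lin R m _ _ (- lam ^+ 2) (0) (be m) IW _).
move=> t; rewrite /= rec_odd /x; ring.
Qed.
End M.

Section E.
Variable R : realType.
Variables (alpha lambda E theta : R).
Definition xs (m : nat) : R := cos (2 * pi * ((m.*2)%:R * alpha + theta)).

Lemma cosarg (z : int) (m : nat) : z = (m.*2)%:Z ->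
  cos (2 * pi * (z%:~R * alpha + theta)) = xs m.
Proof. by move=> ->. Qed.

Lemma intr_eq (z : int) (m : nat) : z = m%:Z -> z%:~R = m%:R :> R.
Proof. by move=> ->. Qed.

Lemma entry (i j : nat) :
  Hop alpha lambda theta (delta R j%:Z) i%:Z - E * delta R j%:Z i%:Z
  = Mx lambda E xs i j.
Proof.
rewrite /Hop /delta /Mx /chop /vpot.
have e1 : (i%:Z + 1 == j%:Z) = (i.+1 == j) by apply/eqP/eqP; lia.
have e2 : (i%:Z - 1 == j%:Z) = (j.+1 == i) by apply/eqP/eqP; lia.
have e3 : (i%:Z == j%:Z) = (i == j) by apply/eqP/eqP; lia.
rewrite e1 e2 e3.
case: (eqVneq i j) => [<-|nij].
  have f1 : (i.+1 == i) = false by apply/eqP; lia.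
  rewrite f1 /= ?(mulr0, mulr1, add0r, addr0, subr0, mulr1n, mulr0n).
  have := modn2 i; case Ho: (odd i) => /= hm.
    congr (_ - _); rewrite /xs; congr (cos (2 * pi * (_ * alpha + theta))).
    by rewrite (@intr_eq _ ((i %/ 2).*2)) //; lia.
  congr (_ - _); rewrite /xs; congr (cos (2 * pi * (_ * alpha + theta))).
  by rewrite (@intr_eq _ ((i %/ 2).*2)) //; lia.
rewrite /= ?(mulr0, mulr1, add0r, addr0, subr0, mulr1n, mulr0n).
case: (eqVneq j i.+1) => [->|nj1].
  have f1 : (i.+2 == i) = false by apply/eqP; lia.
  have f2 : (i == i.+2) = false by apply/eqP; lia.
  have f3 : minn i i.+1 = i by lia.
  rewrite ?eqxx f1 f2 f3 /= ?(mulr0, mulr1, add0r, addr0, subr0, mulr1n, mulr0n).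
  have := modn2 i; case Ho: (odd i) => /= hm; rewrite hm //=.
  rewrite /xs; congr (cos (2 * pi * (_ * alpha + theta))).
  by rewrite (@intr_eq _ ((i %/ 2).*2)) //; lia.
case: (eqVneq i j.+1) => [ei|ni1].
  subst i.
  have f1 : (j.+2 == j) = false by apply/eqP; lia.
  have f2 : (j == j.+2) = false by apply/eqP; lia.
  have f3 : minn j.+1 j = j by lia.
  have f4 : (Posz j.+1 - 1) = Posz j by lia.
  rewrite ?eqxx f3 f4 /= ?(mulr0, mulr1, add0r, addr0, subr0, mulr1n, mulr0n).
  have := modn2 j; case Ho: (odd j) => /= hm; rewrite hm //=.
  rewrite /xs; congr (cos (2 * pi * (_ * alpha + theta))).
  by rewrite (@intr_eq _ ((j %/ 2).*2)) //; lia.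
have f1 : (i.+1 == j) = false by rewrite eq_sym (negPf nj1).
have f2 : (j.+1 == i) = false by rewrite eq_sym (negPf ni1).
by rewrite /= ?(mulr0, mulr1, add0r, addr0, subr0, mulr1n, mulr0n).
Qed.
Lemma Pk_Dk n : Pk alpha lambda E n theta = Dk (Mx lambda E xs) n.
Proof.
rewrite /Pk /Dk; congr (\det _); apply/matrixP => i j; rewrite !mxE; exact: entry.
Qed.
End E.

Lemma natr2 (R : realType) (m : nat) : (m.*2)%:R = 2 * m%:R :> R.
Proof. by rewrite -addnn natrD; ring. Qed.

Theorem lemma3p14 (R : realType) (alpha lambda E : R) (hlambda : 0 < lambda)
  (k : nat) (hk : ~~ odd k) :
  exists Rp : {poly R},
    (size Rp <= (k./2).+1)%N /\
    forall theta : R,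
      Pk alpha lambda E k theta
      = Rp.[cos (2 * pi * (theta + ((k./2)%:R - 1) * alpha))].
Proof.
pose n := k./2.
have hk2 : k = n.*2 by rewrite /n; move: (odd_double_half k); rewrite (negbTE hk) add0n.
pose be m := 2 * pi * (((m.*2)%:R - (n%:R - 1)) * alpha) : R.
have [A [B [hA [hB e]]]] := (@cls_D R lambda E be n).1.
exists A; split => // theta.
rewrite -/n.
set t := 2 * pi * (theta + (n%:R - 1) * alpha).
have h1 : Pk alpha lambda E k theta = Dk (Mx lambda E (fun i => cos (t + be i))) n.*2.
  rewrite Pk_Dk hk2; congr (Dk (Mx _ _ _) _); apply: funext => m.
  by rewrite /xs /t /be; congr cos; ring.
have h2 : Pk alpha lambda E k theta = Dk (Mx lambda E (fun i => cos (- t + be i))) n.*2.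
  rewrite Pk_Dk hk2 (@Dk_rev R lambda E n (@xs R alpha theta)) // => m hm.
  have ee : ((n.-1 - m).*2 + m.*2 + 2 = n.*2)%N by lia.
  have := congr1 (fun k => k%:R : R) ee; rewrite /= !natrD !natr2 => ee'.
  rewrite /xs -cosN; congr cos.
  rewrite natr2; have -> : ((n.-1 - m)%:R : R) = n%:R - m%:R - 1 by lra.
  rewrite /t /be natr2; ring.
have := e t; have := e (- t); rewrite cosN sinN -h1 -h2.
lra.
Qed.
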